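(* Let $A$ be a skew brace. Then $\mathrm{Spec}\,A$ (with the spectral topology) is irreducible if and only if $\mathrm{Nil}\,A$ is a prime ideal.
   Context: A (left) skew brace is a triple $(A,+,\circ)$ where $(A,+)$ and $(A,\circ)$ are groups such that $a\circ(b+c)=a\circ b-a+a\circ c$ for all $a,b,c$; common identity $e$. Put $\lambda_a(b)=-a+a\circ b$ and $a*b=-a+a\circ b-b$. An ideal is a normal subgroup $I$ of both $(A,+)$ and $(A,\circ)$ with $\lambda_a(I)\subseteq I$ for all $a$. A prime ideal is a proper ideal $P$ such that for any subsets $X,Y$ of $A$, $\{x*y\mid x\in X,y\in Y\}\subseteq P$ implies $X\subseteq P$ or $Y\subseteq P$; $\mathrm{Spec}\,A$ is the set of prime ideals, with the spectral topology whose closed sets are $H(I)=\{P\in\mathrm{Spec}\,A\mid I\subseteq P\}$, $I$ an ideal. $\mathrm{Nil}\,A$ is the intersection of all prime ideals of $A$. A space is irreducible if it is not the union of two proper closed subsets. *)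

(* Defs.v *)
Record SkewBrace := {
  sb_car :> Type;
  sb_add : sb_car -> sb_car -> sb_car;
  sb_opp : sb_car -> sb_car;
  sb_circ : sb_car -> sb_car -> sb_car;
  sb_inv : sb_car -> sb_car;
  sb_e : sb_car;
  sb_addA : forall a b c, sb_add a (sb_add b c) = sb_add (sb_add a b) c;
  sb_add0l : forall a, sb_add sb_e a = a;
  sb_add0r : forall a, sb_add a sb_e = a;
  sb_addNl : forall a, sb_add (sb_opp a) a = sb_e;
  sb_addNr : forall a, sb_add a (sb_opp a) = sb_e;
  sb_circA : forall a b c, sb_circ a (sb_circ b c) = sb_circ (sb_circ a b) c;
  sb_circ1l : forall a, sb_circ sb_e a = a;
  sb_circ1r : forall a, sb_circ a sb_e = a;
  sb_circVl : forall a, sb_circ (sb_inv a) a = sb_e;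
  sb_circVr : forall a, sb_circ a (sb_inv a) = sb_e;
  sb_brace : forall a b c,
    sb_circ a (sb_add b c) = sb_add (sb_add (sb_circ a b) (sb_opp a)) (sb_circ a c)
}.

Section Defs.
Variable A : SkewBrace.

Local Notation "a + b" := (sb_add A a b).
Local Notation "- a" := (sb_opp A a).
Local Notation "a 'o' b" := (sb_circ A a b) (at level 40, left associativity).

Definition sb_lambda (a b : A) : A := - a + (a o b).

Definition sb_star (a b : A) : A := (- a + (a o b)) + - b.

Definition is_ideal (I : A -> Prop) : Prop :=
  I (sb_e A) /\
  (forall x y, I x -> I y -> I (x + y)) /\
  (forall x, I x -> I (- x)) /\
  (forall a x, I x -> I ((a + x) + - a)) /\
  (forall x y, I x -> I y -> I (x o y)) /\
  (forall x, I x -> I (sb_inv A x)) /\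
  (forall a x, I x -> I ((a o x) o sb_inv A a)) /\
  (forall a x, I x -> I (sb_lambda a x)).

Definition is_prime_ideal (P : A -> Prop) : Prop :=
  is_ideal P /\
  (exists a, ~ P a) /\
  (forall X Y : A -> Prop,
     (forall x y, X x -> Y y -> P (sb_star x y)) ->
     (forall x, X x -> P x) \/ (forall y, Y y -> P y)).

Definition Spec : (A -> Prop) -> Prop := is_prime_ideal.

Definition H_closed (I : A -> Prop) : (A -> Prop) -> Prop :=
  fun P => is_prime_ideal P /\ (forall x, I x -> P x).

Definition spectral_closed (F : (A -> Prop) -> Prop) : Prop :=
  exists I, is_ideal I /\ (forall P, F P <-> H_closed I P).

Definition Nil : A -> Prop := fun a => forall P, is_prime_ideal P -> P a.

End Defs.

Definition irreducible {T : Type} (X : T -> Prop) (closed : (T -> Prop) -> Prop) : Prop :=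
  (exists x, X x) /\
  ~ (exists F G : T -> Prop,
       closed F /\ closed G /\
       (exists x, X x /\ ~ F x) /\ (exists x, X x /\ ~ G x) /\
       (forall x, X x -> F x \/ G x)).

(* Main.v *)
Require Import Defs.
From Stdlib Require Import Classical.

Definition gen (A : SkewBrace) (X : A -> Prop) : A -> Prop :=
  fun a => forall I, is_ideal A I -> (forall x, X x -> I x) -> I a.

Lemma gen_ideal (A : SkewBrace) (X : A -> Prop) : is_ideal A (gen A X).
Proof.
  unfold gen.
  repeat split; intros;
  match goal with H : is_ideal A ?I |- ?I _ =>
    pose proof H as (h1 & h2 & h3 & h4 & h5 & h6 & h7 & h8);
    repeat first [ assumption | apply h1 | apply h8 | apply h4 | apply h7 | apply h2 | apply h3
      | apply h5 | apply h6 | apply h7 | apply h8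
      | match goal with Hh : forall I0, is_ideal A I0 -> _ -> I0 ?z |- _ ?z =>
          apply (Hh I) end ] end.
Qed.

Lemma H_gen (A : SkewBrace) (X : A -> Prop) P :
  H_closed A (gen A X) P <-> (is_prime_ideal A P /\ forall x, X x -> P x).
Proof.
  unfold H_closed, gen; split; intros [Hp Hs]; (split; [exact Hp|]).
  - intros x Hx. apply Hs. intros I _ HI. apply HI. exact Hx.
  - intros x Hx. apply Hx; [apply Hp| exact Hs].
Qed.

Lemma Nil_ideal (A : SkewBrace) : is_ideal A (Nil A).
Proof.
  unfold Nil.
  repeat split; intros;
  match goal with H : is_prime_ideal A ?I |- ?I _ =>
    pose proof H as [(h1 & h2 & h3 & h4 & h5 & h6 & h7 & h8) _];
    repeat first [ apply h1 | apply h8 | apply h4 | apply h7 | apply h2 | apply h3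
      | apply h5 | apply h6 | apply h7 | apply h8
      | match goal with Hh : forall I0, is_prime_ideal A I0 -> I0 ?z |- _ ?z =>
          apply (Hh I); assumption end ] end.
Qed.

Theorem proposition4p13 (A : SkewBrace) :
  irreducible (Spec A) (spectral_closed A) <-> is_prime_ideal A (Nil A).
Proof.
  split.
  - intros [[P0 HP0] Hirr].
    split; [apply Nil_ideal|split].
    + pose proof HP0 as [_ [[a Ha] _]]. exists a. intro Hn. apply Ha, Hn.
      exact HP0.
    + intros X Y HXY.
      destruct (classic (forall x, X x -> Nil A x)) as [HX|HX]; [left; exact HX|].
      destruct (classic (forall y, Y y -> Nil A y)) as [HY|HY]; [right; exact HY|].
      exfalso. apply Hirr.
      exists (H_closed A (gen A X)), (H_closed A (gen A Y)).
      split; [exists (gen A X); split; [apply gen_ideal|tauto]|].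
      split; [exists (gen A Y); split; [apply gen_ideal|tauto]|].
      split.
      { apply not_all_ex_not in HX. destruct HX as [x Hx].
        apply imply_to_and in Hx. destruct Hx as [Hx Hn].
        apply not_all_ex_not in Hn. destruct Hn as [P HP].
        apply imply_to_and in HP. destruct HP as [HP HPx].
        exists P. split; [exact HP|]. rewrite H_gen. intros [_ HH]. auto. }
      split.
      { apply not_all_ex_not in HY. destruct HY as [x Hx].
        apply imply_to_and in Hx. destruct Hx as [Hx Hn].
        apply not_all_ex_not in Hn. destruct Hn as [P HP].
        apply imply_to_and in HP. destruct HP as [HP HPx].
        exists P. split; [exact HP|]. rewrite H_gen. intros [_ HH]. auto. }
      intros P HP. rewrite !H_gen.
      destruct (proj2 (proj2 HP) X Y) as [H1|H1].
      * intros x y hx hy. apply (HXY x y hx hy). exact HP.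
      * left; auto.
      * right; auto.
  - intros HN. split.
    + exists (Nil A). exact HN.
    + intros (F & G & [I [HI HF]] & [J [HJ HG]] & [x [Hx HFx]] & [y [Hy HGy]] & Hcov).
      destruct (Hcov _ HN) as [HNF|HNF].
      * apply HFx. apply HF. apply HF in HNF. destruct HNF as [_ HIN].
        split; [exact Hx|]. intros z Hz. apply (HIN z Hz). exact Hx.
      * apply HGy. apply HG. apply HG in HNF. destruct HNF as [_ HIN].
        split; [exact Hy|]. intros z Hz. apply (HIN z Hz). exact Hy.
Qed.
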